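(* Let $n$ be a positive integer and let $A(n)=(a_{ij})$, $p=p(n)$, $pp=pp(n)$, $b(n)$, $l_{max}$ be as in the context. Let $m\ge 1$ be an integer such that $\overline{p}=pm$ satisfies $\lfloor \overline{p}/2\rfloor> b(n)$ and $\overline{p}\ge 2\,l_{max}$, put $r=\lfloor\overline{p}/2\rfloor$, let $v$ be an integer with $v\ge pp+\overline{p}$, and let $B=(b_{ij})_{1\le i,j\le\overline{p}}$ be the $\overline{p}\times\overline{p}$ matrix with $b_{ij}=a_{v+i,v+j}$ if $i-r\le j\le i+r$; $b_{ij}=a_{v+i,v+j-\overline{p}}$ if $j>i+r$; $b_{ij}=a_{v+i,v+j+\overline{p}}$ if $j<i-r$. Consider the incidence structure whose points are the columns of $B$ and whose lines are the rows of $B$, where column $i$ is incident with row $j$ iff $b_{ji}=1$. Then any two distinct lines are incident with at most one common point; equivalently, there are no indices $1\le i<j\le\overline{p}$, $1\le k<l\le\overline{p}$ with $b_{ik}=b_{il}=b_{jk}=b_{jl}=1$.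
   Context: $\mathbb{N}=\{1,2,3,\dots\}$. Fix a positive integer $n$. The infinite $\{0,1\}$-matrix $A(n)=(a_{ij})_{i,j\in\mathbb{N}}$ is defined recursively. Its entries are determined row by row (row $1$ first), and within each row from left to right, so that $a_{kl}$ is determined after all $a_{ij}$ with $i<k$ and all $a_{kj}$ with $j<l$. One sets $a_{kl}=1$ if and only if all of the following hold: (1) $\sum_{j<l}a_{kj}<n+1$; (2) $\sum_{i<k}a_{il}<n+1$; (3) there is no pair $(i,j)$ with $1\le i<k$, $1\le j<l$ and $a_{ij}=a_{il}=a_{kj}=1$. Otherwise $a_{kl}=0$. The matrix $A(n)$ is eventually periodic along the diagonal: there exist $c\ge0$, $q\ge1$ with $a_{i+q,j+q}=a_{ij}$ for all $i>c$, $j\ge1$. The period $p=p(n)$ is the smallest $q\ge1$ for which such a $c$ exists, and the preperiod $pp=pp(n)$ is the smallest $c\ge 0$ with $a_{i+p,j+p}=a_{ij}$ for all $i>c$, $j\ge 1$. Define $b(n)=\max\{|j-i| : i,j\ge1,\ a_{ij}=1,\ i>pp(n)\}$. The length of a row $k$ of $A(n)$ (which contains finitely many and at least one ones) is $l-f+1$, where $f$ and $l$ are the smallest and largest $j$ with $a_{kj}=1$; $l_{max}$ is the maximum length of a row $k$ of $A(n)$ with $k>pp(n)$. *)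

(* Defs.v *)
From mathcomp Require Import all_boot.
Set Implicit Arguments. Unset Strict Implicit. Unset Printing Implicit Defensive.

(* The matrix A(n), indices from 1 (entries with index 0 are [false]). *)

(* Value of a_{k l}, given the rows above ([P i j] for i < k) and the
   current row [cur j] for j < l.
   [count f (iota 1 l.-1)] is the sum of f j over 1 <= j < l. *)
Definition entry (n : nat) (P : nat -> nat -> bool) (k l : nat)
    (cur : nat -> bool) : bool :=
  [&& 0 < l,
      count cur (iota 1 l.-1) < n + 1,
      count (fun i => P i l) (iota 1 k.-1) < n + 1 &
      ~~ has (fun i => has (fun j => [&& P i j, P i l & cur j])
                           (iota 1 l.-1)) (iota 1 k.-1)].

(* [rowseq n P k l] = [:: a_{k0}; a_{k1}; ...; a_{kl}] with a_{k0} = false. *)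
Fixpoint rowseq (n : nat) (P : nat -> nat -> bool) (k l : nat) : seq bool :=
  match l with
  | 0 => [:: false]
  | l'.+1 => let s := rowseq n P k l' in
             rcons s (entry n P k l'.+1 (fun j => nth false s j))
  end.

(* [rows n k w] = rows 0..k of A(n), each truncated to columns 0..w
   (row 0 and column 0 are all false).  Since a_{kl} only depends on
   entries a_{ij} with j <= l, truncation is harmless. *)
Fixpoint rows (n k w : nat) : seq (seq bool) :=
  match k with
  | 0 => [:: nseq w.+1 false]
  | k'.+1 => let R := rows n k' w in
             rcons R (rowseq n (fun i j => nth false (nth [::] R i) j) k'.+1 w)
  end.

Definition A (n i j : nat) : bool := nth false (nth [::] (rows n i j) i) j.

Definition periodic_from (n q c : nat) : Prop :=
  forall i j, c < i -> 0 < j -> A n (i + q) (j + q) = A n i j.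

Definition is_period (n p : nat) : Prop :=
  0 < p /\ (exists c, periodic_from n p c) /\
  forall q, 0 < q -> (exists c, periodic_from n q c) -> p <= q.

Definition is_preperiod (n p pp : nat) : Prop :=
  periodic_from n p pp /\ forall c, periodic_from n p c -> pp <= c.

Definition dist (i j : nat) : nat := maxn (i - j) (j - i).

Definition is_b (n pp b : nat) : Prop :=
  (exists i j, [/\ pp < i, 0 < j, A n i j & dist i j = b]) /\
  forall i j, pp < i -> 0 < j -> A n i j -> dist i j <= b.

Definition row_length (n k len : nat) : Prop :=
  exists f l, [/\ 0 < f, A n k f, A n k l,
    (forall j, 0 < j -> A n k j -> f <= j <= l) & len = l - f + 1].

Definition is_lmax (n pp lmax : nat) : Prop :=
  (exists k, pp < k /\ row_length n k lmax) /\
  forall k len, pp < k -> row_length n k len -> len <= lmax.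

Definition Bmat (n pbar v i j : nat) : bool :=
  let r := pbar./2 in
  if i + r < j then A n (v + i) (v + j - pbar)
  else if j + r < i then A n (v + i) (v + j + pbar)
  else A n (v + i) (v + j).

(* Main.v *)
Require Import Defs.
From mathcomp Require Import all_boot.
From mathcomp Require Import zify.

Section Basic.
Variable n : nat.

Lemma size_rowseq P k l : size (rowseq n P k l) = l.+1.
Proof. by elim: l => //= l IH; rewrite size_rcons IH. Qed.

Lemma nth_rowseq P k l j : j <= l ->
  nth false (rowseq n P k l) j = nth false (rowseq n P k j) j.
Proof.
elim: l => [|l IH]; first by rewrite leqn0 => /eqP ->.
rewrite leq_eqVlt => /orP [/eqP -> // | hj] /=.
by rewrite nth_rcons size_rowseq hj; apply: IH.
Qed.

Lemma rowseq_last P k l : 0 < l ->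
  nth false (rowseq n P k l) l = entry n P k l (fun j => nth false (rowseq n P k l.-1) j).
Proof. by case: l => // l _ /=; rewrite nth_rcons size_rowseq ltnn eqxx. Qed.

Lemma entry_ext P Q k l c d :
  (forall i j, 0 < i < k -> 0 < j <= l -> P i j = Q i j) ->
  (forall j, 0 < j < l -> c j = d j) ->
  entry n P k l c = entry n Q k l d.
Proof.
move=> hPQ hc; rewrite /entry.
case: (posnP l) => [->//|hl].
congr (_ && (_ && (_ && _))).
- congr (_ < _); apply: eq_in_count => j; rewrite mem_iota => hj; apply: hc; lia.
- congr (_ < _); apply: eq_in_count => i; rewrite mem_iota => hi; apply: hPQ; lia.
- congr negb; apply: eq_in_has => i; rewrite mem_iota => hi.
  apply: eq_in_has => j; rewrite mem_iota => hj.
  rewrite (hPQ i j) ?(hPQ i l) ?(hc j) //; lia.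
Qed.

Lemma rowseq_ext P Q k l :
  (forall i j, 0 < i < k -> 0 < j <= l -> P i j = Q i j) ->
  rowseq n P k l = rowseq n Q k l.
Proof.
elim: l => [//|l IH] h /=.
rewrite IH; last by move=> i j hi hj; apply: h; lia.
congr rcons; apply: entry_ext => // i j hi hj; apply: h; lia.
Qed.

Lemma size_rows k w : size (rows n k w) = k.+1.
Proof. by elim: k => //= k IH; rewrite size_rcons IH. Qed.

Lemma nth_rows k w i : i <= k -> nth [::] (rows n k w) i = nth [::] (rows n i w) i.
Proof.
elim: k => [|k IH]; first by rewrite leqn0 => /eqP ->.
rewrite leq_eqVlt => /orP [/eqP -> // | hj] /=.
by rewrite nth_rcons size_rows hj; apply: IH.
Qed.

Lemma rows_last k w : nth [::] (rows n k.+1 w) k.+1 =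
  rowseq n (fun i j => nth false (nth [::] (rows n k w) i) j) k.+1 w.
Proof. by rewrite /= nth_rcons size_rows ltnn eqxx. Qed.

Lemma nthF k j : nth false (nseq k false) j = false.
Proof. by elim: k j => [|k IH] [|j] //=. Qed.

Lemma rows_A i : forall w j, j <= w -> nth false (nth [::] (rows n i w) i) j = A n i j.
Proof.
elim/ltn_ind: i => i IH w j hj.
case: i IH => [|i] IH; first (rewrite /A /=; case: j hj => [|j] _ //=; rewrite nthF; case: j => //= j; exact: (esym (nthF j.+1 j))).
rewrite /A !rows_last nth_rowseq //.
congr (nth false _ j); apply: rowseq_ext => i' j' hi hj'.
rewrite !nth_rows; try lia.
rewrite !IH //; lia.
Qed.

Lemma rowP_A k w i j : i <= k -> j <= w -> nth false (nth [::] (rows n k w) i) j = A n i j.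
Proof. by move=> hi hj; rewrite nth_rows // rows_A. Qed.

Lemma A_rec k l : 0 < k -> 0 < l -> A n k l = entry n (A n) k l (A n k).
Proof.
case: k => // k _ hl.
rewrite {1}/A rows_last rowseq_last //; apply: entry_ext.
- move=> i j hi hj; rewrite rowP_A //; lia.
- move=> j hj; rewrite nth_rowseq; last lia.
  rewrite /A rows_last; congr (nth _ _ j); apply: rowseq_ext => i' j' hi hj'.
  rewrite !rowP_A //; lia.
Qed.

Lemma no_rect {i k j l} : 0 < i -> i < k -> 0 < j -> j < l ->
  A n i j -> A n i l -> A n k j -> A n k l = false.
Proof.
move=> h1 h2 h3 h4 a1 a2 a3.
rewrite A_rec; try lia.
have H : has (fun i0 => has (fun j0 => [&& A n i0 j0, A n i0 l & A n k j0])
            (iota 1 l.-1)) (iota 1 k.-1).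
  apply/hasP; exists i; first by rewrite mem_iota; lia.
  apply/hasP; exists j; first by rewrite mem_iota; lia.
  by rewrite a1 a2 a3.
by rewrite /entry H /= !andbF.
Qed.

Lemma rect4 S1 S2 d1 d2 : 0 < S1 -> 0 < S2 -> 0 < d1 -> 0 < d2 ->
  S1 <> S2 -> d1 <> d2 -> A n S1 d1 -> A n S1 d2 -> A n S2 d1 -> A n S2 d2 -> False.
Proof.
move=> h1 h2 h3 h4 hS hd a b c d.
case: (ltngtP S1 S2) => hS'; last by [];
case: (ltngtP d1 d2) => hd'; try by [].
- by have := no_rect h1 hS' h3 hd' a b c; rewrite d.
- by have := no_rect h1 hS' h4 hd' b a d; rewrite c.
- by have := no_rect h2 hS' h3 hd' c d a; rewrite b.
- by have := no_rect h2 hS' h4 hd' d c b; rewrite a.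
Qed.

End Basic.

Lemma row_span {n pp b lmax R c c'} :
  (forall i j, pp < i -> 0 < j -> A n i j -> dist i j <= b) ->
  (forall k len, pp < k -> row_length n k len -> len <= lmax) ->
  pp < R -> 0 < c -> 0 < c' -> A n R c -> A n R c' -> c' < c + lmax.
Proof.
move=> hb hl hR hc hc' hA hA'.
pose Q := fun x => (0 < x) && A n R x.
have hbd : forall x, Q x -> x <= R + b.
  move=> x /andP[h0 hx]; have := hb R x hR h0 hx; rewrite /dist; lia.
have ex : exists x, Q x by exists c; rewrite /Q hc hA.
case: (ex_minnP ex) => f /andP[hf0 hfA] hfmin.
case: (ex_maxnP ex hbd) => L /andP[hL0 hLA] hLmax.
have hrl : row_length n R (L - f + 1).
  exists f, L; split => // j hj hAj.
  by apply/andP; split; [apply: hfmin | apply: hLmax]; rewrite /Q hj hAj.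
have := hl R _ hR hrl.
have : f <= c by apply: hfmin; rewrite /Q hc hA.
have : c' <= L by apply: hLmax; rewrite /Q hc' hA'.
lia.
Qed.

Lemma per_iter n p pp : periodic_from n p pp ->
  forall t i j, pp < i -> 0 < j -> A n (i + t * p) (j + t * p) = A n i j.
Proof.
move=> hper; elim=> [|t IH] i j hi hj; first by rewrite !mul0n !addn0.
rewrite mulSnr !addnA hper; [exact: IH | lia | lia].
Qed.

Theorem theorem4p4 (n p pp b lmax m v : nat) :
  0 < n ->
  is_period n p -> is_preperiod n p pp ->
  is_b n pp b -> is_lmax n pp lmax ->
  0 < m ->
  b < (p * m)./2 ->
  2 * lmax <= p * m ->
  pp + p * m <= v ->
  ~ exists i j k l,
      [&& 1 <= i, i < j, j <= p * m, 1 <= k, k < l & l <= p * m] /\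
      [&& Bmat n (p * m) v i k, Bmat n (p * m) v i l,
          Bmat n (p * m) v j k & Bmat n (p * m) v j l].
Proof.
move=> hn [hp0 _] [hper _] [_ hb2] [_ hl2] hm hbr hlm hv
  [i [j [k [l [/andP[h1 /andP[h2 /andP[h3 /andP[h4 /andP[h5 h6]]]]] /and4P[B1 B2 B3 B4]]]]]].
have hsh : forall x R c, (x = 0 \/ x = p * m \/ x = 2 * (p * m)) -> pp < R -> 0 < c ->
    A n (R + x) (c + x) = A n R c.
  move=> x R c hx hR hc.
  have [t ->] : exists t, x = t * p.
    case: hx => [->|[->|->]]; [by exists 0 | exists m | exists (2 * m)]; lia.
  exact: (@per_iter n p pp hper).
set P := p * m in hsh hbr hlm hv h3 h6 B1 B2 B3 B4.
have hB : forall i k, 1 <= k <= P -> Bmat n P v i k -> exists c E,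
    [/\ A n (v + i) c, 0 < c, c + P = v + k + E & (E = 0 \/ E = P \/ E = 2 * P)].
  move=> i' k' hk; rewrite /Bmat /=.
  case: ifP => _ => [hA|]; first by exists (v + k' - P), 0; split => //; lia.
  case: ifP => _ hA; first by exists (v + k' + P), (2 * P); split => //; lia.
  by exists (v + k'), P; split => //; lia.
have [c1 [E1 [a1 p1 q1 r1]]] := hB i k ltac:(lia) B1.
have [c2 [E2 [a2 p2 q2 r2]]] := hB i l ltac:(lia) B2.
have [c3 [E3 [a3 p3 q3 r3]]] := hB j k ltac:(lia) B3.
have [c4 [E4 [a4 p4 q4 r4]]] := hB j l ltac:(lia) B4.
have hRi : pp < v + i by lia.
have hRj : pp < v + j by lia.
have s1 := row_span (n:=n) (pp:=pp) (b:=b) (lmax:=lmax) hb2 hl2 hRi p1 p2 a1 a2.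
have s2 := row_span (n:=n) (pp:=pp) (b:=b) (lmax:=lmax) hb2 hl2 hRi p2 p1 a2 a1.
have s3 := row_span (n:=n) (pp:=pp) (b:=b) (lmax:=lmax) hb2 hl2 hRj p3 p4 a3 a4.
have s4 := row_span (n:=n) (pp:=pp) (b:=b) (lmax:=lmax) hb2 hl2 hRj p4 p3 a4 a3.
clear hB hn hbr hm.
have hE : E4 + E1 = E3 + E2.
  clear -r1 r2 r3 r4 q1 q2 q3 q4 s1 s2 s3 s4 hlm.
  case: r1 => [?|[?|?]]; subst E1;
  case: r2 => [?|[?|?]]; subst E2;
  case: r3 => [?|[?|?]]; subst E3;
  case: r4 => [?|[?|?]]; subst E4; lia.
have hc12 : c1 <> c2.
  clear -r1 r2 q1 q2 h4 h5 h6.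
  case: r1 => [?|[?|?]]; subst E1;
  case: r2 => [?|[?|?]]; subst E2; lia.
have key : forall R1 R2 x y, pp < R1 -> pp < R2 ->
    A n R1 c1 -> A n R1 c2 -> A n R2 c3 -> A n R2 c4 ->
    (x = 0 \/ x = P \/ x = 2 * P) -> (y = 0 \/ y = P \/ y = 2 * P) ->
    c3 + x = c1 + y -> c4 + x = c2 + y -> R2 + x <> R1 + y -> False.
  move=> R1 R2 x y hR1 hR2 b1 b2 b3 b4 hx hy e1 e2 hne.
  apply: (@rect4 n (R1 + y) (R2 + x) (c1 + y) (c2 + y)); [clear -hR1; lia|clear -hR2; lia|clear -p1; lia|clear -p2; lia|clear -hne; lia|clear -hc12; lia|..].
  - by rewrite hsh.
  - by rewrite hsh.
  - by rewrite -e1 hsh.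
  - by rewrite -e2 hsh.
clear hsh.
case: (leqP E1 E3) => hle.
- apply: (key (v + i) (v + j) 0 (E3 - E1));
    [done|done|done|done|done|done|by left| | | | ].
  + clear -r1 r3 hle;
    case: r1 => [?|[?|?]]; subst E1;
    case: r3 => [?|[?|?]]; subst E3; lia.
  + clear -q1 q3 hle; lia.
  + clear -q1 q2 q3 q4 hE hle; lia.
  + clear -r1 r3 hle h1 h2 h3;
    case: r1 => [?|[?|?]]; subst E1;
    case: r3 => [?|[?|?]]; subst E3; lia.
- apply: (key (v + i) (v + j) (E1 - E3) 0);
    [done|done|done|done|done|done| |by left| | | ].
  + clear -r1 r3 hle;
    case: r1 => [?|[?|?]]; subst E1;
    case: r3 => [?|[?|?]]; subst E3; lia.
  + clear -q1 q3 hle; lia.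
  + clear -q1 q2 q3 q4 hE hle; lia.
  + clear -r1 r3 hle h1 h2 h3;
    case: r1 => [?|[?|?]]; subst E1;
    case: r3 => [?|[?|?]]; subst E3; lia.
Qed.
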